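(* Let $(C,S)$ be a right-angled Coxeter system, $D>0$, and $\alpha,\beta\in C$ such that $\gamma=\alpha^{-1}\beta$ is nontrivial and has $D$-bounded product projections. Then there is a minimal wall $W$ in $\mathbf{W}(\alpha,\beta)$ such that $W\cap W'\ne\emptyset$ for at most $(2D+1)\cdot4^D$ walls $W'\in\mathbf{W}(\alpha,\beta)$.
   Context: Walls: for a reflection $r$ of $C$ (conjugate of a generator), the set of edges $\{g,gs\}$ of $\mathrm{Cay}(C,S)$ with $gsg^{-1}=r$ (hyperplanes of the Davis complex); two walls intersect if the hyperplanes intersect. $\mathbf{W}(\alpha,\beta)$ is the set of walls separating $\alpha$ from $\beta$ (every edge path from $\alpha$ to $\beta$ uses an edge of the wall), partially ordered by $W<W'$ iff $W$ separates $\alpha$ from $W'$; $\mathbf{W}(\gamma)=\mathbf{W}(\mathrm{id},\gamma)$. $\gamma$ has $D$-bounded product projections if every pair of disjoint subsets $A,B\subset\mathbf{W}(\gamma)$ with every element of $A$ incomparable to every element of $B$ satisfies $\min(|A|,|B|)\le D$. *)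

(* Defs.v *)
From mathcomp Require Import all_boot.
From Stdlib Require Import Relations.
Set Implicit Arguments. Unset Strict Implicit. Unset Printing Implicit Defensive.

Section RACG.
Variable S : finType.
(* [comm s t] : the generators s and t commute (m(s,t) = 2); otherwise
   m(s,t) = infinity.  Assumed symmetric and irreflexive in the theorem. *)
Variable comm : rel S.

(* Elements of C are words over S modulo the defining relations
   s s = 1 and s t = t s (comm s t). *)
Inductive wstep : seq S -> seq S -> Prop :=
| ws_cancel (u v : seq S) (s : S) : wstep (u ++ s :: s :: v) (u ++ v)
| ws_comm (u v : seq S) (s t : S) : comm s t -> wstep (u ++ s :: t :: v) (u ++ t :: s :: v).

Definition weq : seq S -> seq S -> Prop := clos_refl_sym_trans _ wstep.

(* group operations: product = concatenation, inverse = reversal *)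
Definition winv (g : seq S) : seq S := rev g.

Definition conj_gen (g : seq S) (s : S) : seq S := g ++ s :: winv g.

Definition is_reflection (r : seq S) : Prop := exists g s, weq (conj_gen g s) r.

(* An edge path from a with labels p (ending at a p) uses an edge of the
   wall of reflection r: some edge {g, g s} of it, g = a u, has g s g^-1 = r. *)
Definition uses_wall (a p r : seq S) : Prop :=
  exists u s v, p = u ++ s :: v /\ weq (conj_gen (a ++ u) s) r.

Definition separates (r a b : seq S) : Prop :=
  forall p, weq (a ++ p) b -> uses_wall a p r.

Definition in_walls (a b r : seq S) : Prop := is_reflection r /\ separates r a b.

(* W_r < W_r' in W(a,...): W_r separates a from W_r', i.e. every edge path from
   a to any vertex of an edge of W_r' uses an edge of W_r. *)
Definition wall_lt (a r r' : seq S) : Prop :=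
  forall g s, weq (conj_gen g s) r' -> separates r a g.

Definition minimal_wall (a b r : seq S) : Prop :=
  in_walls a b r /\ ~ (exists r', in_walls a b r' /\ wall_lt a r' r).

(* hyperplanes of the Davis complex intersect: equal walls, or they cross
   a common square (a vertex g with two commuting generators). *)
Definition walls_intersect (r r' : seq S) : Prop :=
  weq r r' \/
  exists g s t, comm s t /\ weq (conj_gen g s) r /\ weq (conj_gen g t) r'.

Fixpoint distinct_walls (l : seq (seq S)) : Prop :=
  match l with
  | [::] => True
  | x :: l' => (forall y, y \in l' -> ~ weq x y) /\ distinct_walls l'
  end.

(* gamma has D-bounded product projections; W(gamma) = W(id, gamma),
   ordered from the identity. Subsets are lists of distinct walls. *)
Definition bounded_product_projections (D : nat) (gam : seq S) : Prop :=
  forall A B : seq (seq S),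
    distinct_walls A -> distinct_walls B ->
    (forall x, x \in A -> in_walls [::] gam x) ->
    (forall y, y \in B -> in_walls [::] gam y) ->
    (forall x y, x \in A -> y \in B -> ~ weq x y) ->
    (forall x y, x \in A -> y \in B ->
        ~ wall_lt [::] x y /\ ~ wall_lt [::] y x) ->
    minn (size A) (size B) <= D.

End RACG.

(* Main.v *)
From Stdlib Require Import Relations Setoid Morphisms ClassicalEpsilon.
Require Import Defs.
From mathcomp Require Import all_boot zify.
Set Implicit Arguments. Unset Strict Implicit. Unset Printing Implicit Defensive.

Definition pb (P : Prop) : bool := if excluded_middle_informative P then true else false.
Lemma pbP (P : Prop) : reflect P (pb P).
Proof. rewrite /pb; case: excluded_middle_informative => h; by constructor. Qed.

Section Toolkit.
Variable S : finType.
Variable comm : rel S.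
Hypothesis comm_sym : symmetric comm.
Local Notation W := (weq comm).

Lemma W_refl x : W x x. Proof. exact: rst_refl. Qed.
Local Hint Resolve W_refl : core.
Lemma W_sym x y : W x y -> W y x. Proof. exact: rst_sym. Qed.
Lemma W_trans x y z : W x y -> W y z -> W x z. Proof. exact: rst_trans. Qed.

Global Instance W_equiv : Equivalence W.
Proof. split; [exact: W_refl | exact: W_sym | exact: W_trans]. Qed.

Lemma W_catl x y z : W y z -> W (x ++ y) (x ++ z).
Proof.
elim=> [a b st|a|a b _ IH|a b c _ IH1 _ IH2].
- apply: rst_step; case: st => [u v s|u v s t c]; rewrite !catA; by constructor.
- reflexivity.
- by symmetry.
- by transitivity (x ++ b).
Qed.

Lemma W_catr x y z : W y z -> W (y ++ x) (z ++ x).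
Proof.
elim=> [a b st|a|a b _ IH|a b c _ IH1 _ IH2].
- apply: rst_step; case: st => [u v s|u v s t c]; rewrite -!catA /=; by constructor.
- reflexivity.
- by symmetry.
- by transitivity (b ++ x).
Qed.

Global Instance cat_proper : Proper (W ==> W ==> W) (@cat S).
Proof. move=> x y h1 u v h2; transitivity (x ++ v); [exact: W_catl | exact: W_catr]. Qed.

Global Instance cons_proper s : Proper (W ==> W) (cons s).
Proof. move=> x y h. exact: (W_catl [:: s] h). Qed.

Lemma W_rev x y : W x y -> W (rev x) (rev y).
Proof.
elim=> [a b st|a|a b _ IH|a b c _ IH1 _ IH2].
- apply: rst_step; case: st => [u v s|u v s t c].
  + rewrite !rev_cat /= !rev_cons -!cats1 -!catA /=; by constructor.
  + rewrite !rev_cat /= !rev_cons -!cats1 -!catA /=; constructor; by rewrite comm_sym.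
- reflexivity.
- by symmetry.
- by transitivity (rev b).
Qed.

Global Instance rev_proper : Proper (W ==> W) (@rev S).
Proof. move=> x y; exact: W_rev. Qed.

Lemma W_ss s y : W [:: s, s & y] y.
Proof. apply: rst_step; exact: (@ws_cancel _ comm [::] y s). Qed.

Lemma W_inv x : W (x ++ rev x) [::].
Proof.
elim: x => [|s x IH] //=.
rewrite rev_cons -cats1.
have -> : s :: x ++ rev x ++ [:: s] = [:: s] ++ (x ++ rev x) ++ [:: s] by rewrite /= catA.
rewrite IH /=. exact: (W_ss s [::]).
Qed.

Lemma W_invl x : W (rev x ++ x) [::].
Proof. have := W_inv (rev x); by rewrite revK. Qed.

Lemma W_cancel1 x y : W (x ++ rev x ++ y) y.
Proof. by rewrite catA W_inv. Qed.
Lemma W_cancel2 x y : W (rev x ++ x ++ y) y.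
Proof. by rewrite catA W_invl. Qed.
Lemma W_cancel3 x y : W (y ++ x ++ rev x) y.
Proof. by rewrite W_inv cats0. Qed.
Lemma W_cancel4 x y : W (y ++ rev x ++ x) y.
Proof. by rewrite W_invl cats0. Qed.

Lemma W_lcancel x y z : W (x ++ y) (x ++ z) -> W y z.
Proof. move=> h. rewrite -(W_cancel2 x y) -(W_cancel2 x z). by rewrite h. Qed.
Lemma W_rcancel x y z : W (y ++ x) (z ++ x) -> W y z.
Proof. move=> h. rewrite -(W_cancel3 x y) -(W_cancel3 x z) !catA. by rewrite h. Qed.

Lemma conj_cat c g s : conj_gen (c ++ g : seq S) s = c ++ conj_gen g s ++ rev c.
Proof. by rewrite /conj_gen /winv rev_cat -!catA. Qed.

Lemma W_conjc c y z : W (c ++ y ++ rev c) (c ++ z ++ rev c) <-> W y z.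
Proof.
split=> h; last by rewrite h.
apply: (@W_lcancel c). apply: (@W_rcancel (rev c)). by rewrite -!catA.
Qed.

Global Instance conj_proper : Proper (W ==> eq ==> W) (@conj_gen S).
Proof. move=> x y h s _ <-; rewrite /conj_gen /winv. by rewrite h. Qed.

Lemma conj_ss g s : W (conj_gen (g ++ [:: s]) s) (conj_gen g s).
Proof. rewrite /conj_gen /winv rev_cat /= -catA /=. by rewrite W_ss. Qed.

Lemma conj_st g s t : comm s t -> W (conj_gen (g ++ [:: s]) t) (conj_gen g t).
Proof.
move=> c; rewrite /conj_gen /winv rev_cat /= -catA /=.
apply: W_catl.
have -> : W [:: s, t, s & rev g] [:: t, s, s & rev g].
  apply: rst_step; exact: (@ws_comm _ comm [::] _ s t c).
by rewrite W_ss.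
Qed.


Fixpoint cnt (r a p : seq S) : nat :=
  if p is s :: p' then pb (W (conj_gen a s) r) + cnt r (a ++ [:: s]) p' else 0.

Lemma cnt_cat r a p q : cnt r a (p ++ q) = cnt r a p + cnt r (a ++ p) q.
Proof.
elim: p a => [|s p IH] a /=; first by rewrite cats0.
by rewrite IH -catA /= addnA.
Qed.

Lemma pb_eq (P Q : Prop) : (P <-> Q) -> pb P = pb Q.
Proof. move=> [h1 h2]; apply/idP/idP => /pbP H; apply/pbP; auto. Qed.

Lemma cnt_base r a a' p : W a a' -> cnt r a p = cnt r a' p.
Proof.
elim: p a a' => //= s p IH a a' h.
rewrite (IH _ (a' ++ [:: s])); last by rewrite h.
congr (nat_of_bool _ + _); apply: pb_eq; by rewrite h.
Qed.

Lemma cnt_step_odd r a x y : wstep comm x y -> odd (cnt r a x) = odd (cnt r a y).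
Proof.
case=> [u v s | u v s t c]; rewrite !cnt_cat /=.
- have -> : pb (W (conj_gen ((a ++ u) ++ [:: s]) s) r) = pb (W (conj_gen (a ++ u) s) r).
    apply: pb_eq; by rewrite conj_ss.
  rewrite (@cnt_base r (((a ++ u) ++ [:: s]) ++ [:: s]) (a ++ u)); last first.
    rewrite -!catA /=. have -> : W [:: s; s] [::] by exact: (W_ss s [::]).
    by rewrite cats0.
  by rewrite [nat_of_bool _ + (_ + _)]addnA addnn !oddD odd_double.
- have -> : pb (W (conj_gen ((a ++ u) ++ [:: s]) t) r) = pb (W (conj_gen (a ++ u) t) r).
    apply: pb_eq; by rewrite conj_st.
  have -> : pb (W (conj_gen ((a ++ u) ++ [:: t]) s) r) = pb (W (conj_gen (a ++ u) s) r).
    apply: pb_eq; rewrite conj_st //; by rewrite comm_sym.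
  rewrite (@cnt_base r (((a ++ u) ++ [:: s]) ++ [:: t]) (((a ++ u) ++ [:: t]) ++ [:: s])).
    by congr (odd (_ + _)); rewrite addnCA.
  rewrite -!catA /=. apply: W_catl; apply: W_catl. apply: rst_step. exact: (@ws_comm _ comm [::] [::] s t c).
Qed.

Lemma cnt_weq_odd r x y : W x y -> forall a, odd (cnt r a x) = odd (cnt r a y).
Proof.
elim=> [u v st|u|u v _ IH|u v w _ IH1 _ IH2] a.
- exact: cnt_step_odd.
- by [].
- by rewrite IH.
- by rewrite IH1 IH2.
Qed.

Lemma path_parity r a p q : W (a ++ p) (a ++ q) -> odd (cnt r a p) = odd (cnt r a q).
Proof.
move=> h; have := cnt_weq_odd r h [::]; rewrite !cnt_cat /= !oddD.
by move=> /(congr1 (addb (odd (cnt r [::] a)))); rewrite !addKb.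
Qed.

Lemma first_use r a p : 0 < cnt r a p ->
  exists u s v, p = u ++ s :: v /\ cnt r a u = 0 /\ W (conj_gen (a ++ u) s) r.
Proof.
elim: p a => //= s p IH a.
case E: (pb (W (conj_gen a s) r)).
- move=> _; exists [::], s, p; split => //; split => //. rewrite cats0; exact/pbP.
- rewrite add0n => /IH [u [t [v [-> [h0 h1]]]]].
  exists (s :: u), t, v; split => //; split; first by rewrite /= E h0.
  by rewrite -catA in h1.
Qed.

Lemma use_cnt r a p : uses_wall comm a p r -> 0 < cnt r a p.
Proof.
move=> [u [s [v [-> h]]]]; rewrite cnt_cat /=.
have -> : pb (W (conj_gen (a ++ u) s) r) = true by apply/pbP.
by rewrite /= add1n addnS.
Qed.

Lemma cnt_use r a p : 0 < cnt r a p -> uses_wall comm a p r.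
Proof. move=> /first_use [u [s [v [-> [_ h]]]]]. by exists u, s, v. Qed.

Lemma cnt_rconj r X m : cnt r (r ++ X) m = cnt r X m.
Proof.
elim: m X => //= s m IH X.
rewrite -catA IH; congr (nat_of_bool _ + _); apply: pb_eq.
rewrite conj_cat.
have E : W r (r ++ r ++ rev r) by rewrite W_cancel3.
split => h.
- apply/(W_conjc r); by transitivity r.
- transitivity (r ++ r ++ rev r); last by symmetry. by apply/(W_conjc r).
Qed.

Lemma del_W X s m t v : W (conj_gen X s) (conj_gen (X ++ s :: m) t) ->
  W (X ++ m ++ v) (X ++ s :: m ++ t :: v).
Proof.
move=> h.
have h1 : W [:: s] (s :: m ++ t :: rev m ++ [:: s]).
  apply/(@W_conjc X). move: h; rewrite conj_cat /conj_gen /winv /= rev_cons -cats1 -!catA /=.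
  done.
have h2 : W [::] (m ++ t :: rev m ++ [:: s]).
  apply: (@W_lcancel [:: s]). by rewrite cats0.
have h3 : W m (s :: m ++ [:: t]).
  transitivity ([:: s] ++ [:: s] ++ m); first by rewrite /= W_ss.
  transitivity ([:: s] ++ (m ++ t :: rev m ++ [:: s]) ++ [:: s] ++ m).
    by rewrite -h2.
  rewrite /= -!catA /= -catA /=.
  have -> : W (rev m ++ [:: s, s & m]) [::].
    rewrite W_ss. exact: W_invl.
  by [].
have -> : X ++ s :: m ++ t :: v = X ++ (s :: m ++ [:: t]) ++ v by rewrite /= -catA.
by rewrite -h3.
Qed.

Lemma cnt_even r k : forall a p, cnt r a p = k.*2 ->
  exists q, W (a ++ q) (a ++ p) /\ cnt r a q = 0.
Proof.
elim: k => [|k IH] a p.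
- move=> h; by exists p.
- move=> h.
  have /first_use [u [s [p1 [Ep [hu h1]]]]] : 0 < cnt r a p by rewrite h.
  move: h; rewrite Ep cnt_cat hu /=.
  have -> : pb (W (conj_gen (a ++ u) s) r) = true by apply/pbP.
  rewrite add0n add1n doubleS => /eqP; rewrite eqSS => /eqP h.
  have /first_use [m [t [v [Ep1 [hm h2]]]]] : 0 < cnt r ((a ++ u) ++ [:: s]) p1 by rewrite h.
  move: h; rewrite Ep1 cnt_cat hm /=.
  have -> : pb (W (conj_gen (((a ++ u) ++ [:: s]) ++ m) t) r) = true by apply/pbP.
  rewrite add0n add1n => /eqP; rewrite eqSS => /eqP h.
  have hd : W (conj_gen (a ++ u) s) (conj_gen ((a ++ u) ++ s :: m) t).
    rewrite h1. symmetry. move: h2. by rewrite -!catA.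
  have hrs : W ((a ++ u) ++ [:: s]) (r ++ (a ++ u)).
    rewrite -h1 /conj_gen /winv.
    transitivity ((a ++ u) ++ s :: (rev (a ++ u) ++ (a ++ u))); last by rewrite -!catA.
    by rewrite W_invl.
  have e1 : cnt r a (u ++ m ++ v) = k.*2.
    rewrite !cnt_cat hu add0n -(cnt_rconj r (a ++ u) m) -(cnt_base r m hrs) hm add0n -h.
    apply: cnt_base. have := del_W [::] hd. by rewrite !cats0 -!catA.
  have [q [hq hq0]] := IH a _ e1.
  exists q; split => //. rewrite hq. have := del_W v hd. by rewrite -!catA.
Qed.


Lemma no_use_cnt0 r a q : cnt r a q = 0 -> ~ uses_wall comm a q r.
Proof. by move=> h /use_cnt; rewrite h. Qed.

Lemma even_ex n : ~~ odd n -> exists k, n = k.*2.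
Proof. move=> h; exists n./2; by rewrite even_halfK. Qed.

Lemma halfspace r a g s : W (conj_gen g s) r -> separates comm r a g ->
  separates comm r a (g ++ [:: s]) -> False.
Proof.
move=> hr H1 H2.
set p := rev a ++ g.
have hp : W (a ++ p) g by rewrite /p W_cancel1.
case Eo: (odd (cnt r a p)).
- have e : cnt r a (p ++ [:: s]) = (cnt r a p).+1.
    rewrite cnt_cat /=.
    have -> : pb (W (conj_gen (a ++ p) s) r) = true by apply/pbP; rewrite hp.
    by rewrite addn1.
  have [k ek] : exists k, cnt r a (p ++ [:: s]) = k.*2.
    apply: even_ex; by rewrite e /= Eo.
  have [q [hq hq0]] := cnt_even ek.
  apply: (no_use_cnt0 hq0); apply: H2. rewrite hq catA. by rewrite hp.
- have [k ek] : exists k, cnt r a p = k.*2 by apply: even_ex; rewrite Eo.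
  have [q [hq hq0]] := cnt_even ek.
  apply: (no_use_cnt0 hq0); apply: H1. by rewrite hq hp.
Qed.

Lemma lt_irrefl a r : is_reflection comm r -> ~ wall_lt comm a r r.
Proof.
move=> [g [s hr]] H. apply: (halfspace hr (H _ _ hr)).
apply: (H (g ++ [:: s]) s). by rewrite conj_ss.
Qed.

Lemma lt_cross a Wl V g s t : comm s t -> W (conj_gen g s) Wl ->
  W (conj_gen g t) V -> ~ wall_lt comm a Wl V.
Proof.
move=> c h1 h2 H. apply: (halfspace h1 (H _ _ h2)).
apply: (H (g ++ [:: s]) t). by rewrite conj_st.
Qed.

Lemma lt_trans a r1 r2 r3 : wall_lt comm a r1 r2 -> wall_lt comm a r2 r3 ->
  wall_lt comm a r1 r3.
Proof.
move=> H12 H23 g s hg p hp.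
have [u [t [v [Ep hu]]]] := H23 g s hg p hp.
have [u1 [t1 [v1 [Eu hu1]]]] := H12 _ _ hu u (W_refl _).
exists u1, t1, (v1 ++ t :: v); split => //. by rewrite Ep Eu -catA.
Qed.

Lemma lt_weql a r r' x : W r r' -> wall_lt comm a r x -> wall_lt comm a r' x.
Proof.
move=> e H g s hg p hp. have [u [t [v [Ep hu]]]] := H g s hg p hp.
exists u, t, v; split => //. by rewrite hu.
Qed.

Lemma lt_weqr a r x x' : W x x' -> wall_lt comm a r x -> wall_lt comm a r x'.
Proof. move=> e H g s hg. apply: H. apply: W_trans hg _. by symmetry. Qed.

Definition Tr (a x : seq S) := rev a ++ x ++ a.

Lemma Tr_inj a x y : W (Tr a x) (Tr a y) -> W x y.
Proof. rewrite /Tr. have := W_conjc (rev a) x y. rewrite revK. by case. Qed.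

Lemma W_unconj a Y : W (rev a ++ (a ++ Y ++ rev a) ++ a) Y.
Proof. by rewrite -!catA W_cancel2 W_cancel4. Qed.
Lemma W_unconj' a Y : W (a ++ (rev a ++ Y ++ a) ++ rev a) Y.
Proof. by rewrite -!catA W_cancel1 W_cancel3. Qed.

Lemma Tr_walls a b x : in_walls comm a b x -> in_walls comm [::] (rev a ++ b) (Tr a x).
Proof.
move=> [[g [s hr]] hs]; split.
- exists (rev a ++ g), s. rewrite conj_cat revK /Tr. by rewrite hr.
- move=> p hp.
  have hp' : W (a ++ p) b by rewrite /= in hp; rewrite hp W_cancel1.
  have [u [s1 [v [Ep hu]]]] := hs p hp'.
  exists u, s1, v; split => //.
  rewrite /= /Tr -hu (conj_cat a). by rewrite W_unconj.
Qed.

Lemma Tr_lt a x y : wall_lt comm [::] (Tr a x) (Tr a y) -> wall_lt comm a x y.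
Proof.
move=> H g s hg p hp.
have hg' : W (conj_gen (rev a ++ g) s) (Tr a y) by rewrite conj_cat revK /Tr hg.
have hp' : W ([::] ++ p) (rev a ++ g) by rewrite /= -hp W_cancel2.
have [u [t [v [Ep hu]]]] := H _ _ hg' p hp'.
exists u, t, v; split => //.
rewrite /= in hu. rewrite conj_cat hu /Tr. by rewrite W_unconj'.
Qed.

Lemma distinct_map a l : distinct_walls comm l -> distinct_walls comm (map (Tr a) l).
Proof.
elim: l => //= x l IH [h1 h2]; split; last exact: IH.
move=> y /mapP [y' hy' ->] /Tr_inj. exact: h1.
Qed.

Lemma BPP_a a b D : bounded_product_projections comm D (winv a ++ b) ->
  forall A B : seq (seq S), distinct_walls comm A -> distinct_walls comm B ->
  (forall x, x \in A -> in_walls comm a b x) ->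
  (forall y, y \in B -> in_walls comm a b y) ->
  (forall x y, x \in A -> y \in B -> ~ W x y) ->
  (forall x y, x \in A -> y \in B -> ~ wall_lt comm a x y /\ ~ wall_lt comm a y x) ->
  minn (size A) (size B) <= D.
Proof.
move=> H A B dA dB iA iB dis inc.
rewrite -(size_map (Tr a) A) -(size_map (Tr a) B). apply: H.
- exact: distinct_map.
- exact: distinct_map.
- move=> x /mapP [x' hx ->]; exact: Tr_walls (iA _ hx).
- move=> x /mapP [x' hx ->]; exact: Tr_walls (iB _ hx).
- move=> x y /mapP [x' hx ->] /mapP [y' hy ->] /Tr_inj; exact: dis.
- move=> x y /mapP [x' hx ->] /mapP [y' hy ->].
  have [h1 h2] := inc _ _ hx hy.
  split => /Tr_lt; [exact: h1 | exact: h2].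
Qed.

Lemma reduced_ex a b : exists p, W (a ++ p) b /\ forall q, W (a ++ q) b -> size p <= size q.
Proof.
have [p0 h0] : exists p, W (a ++ p) b by exists (rev a ++ b); rewrite W_cancel1.
move: (leqnn (size p0)); move: {2}(size p0) => n.
elim: n p0 h0 => [|n IH] p0 h0 hs;
  case: (pbP (exists q, W (a ++ q) b /\ size q < size p0)) => [[q [hq hlt]]|hn].
- by move: (leq_trans hlt hs).
- exists p0; split => // q hq; rewrite leqNgt; apply/negP => hlt; apply: hn; by exists q.
- apply: (IH q hq). by rewrite -ltnS (leq_trans hlt hs).
- exists p0; split => // q hq; rewrite leqNgt; apply/negP => hlt; apply: hn; by exists q.
Qed.

Lemma pos_use r a p x0 i : i < size p ->
  W (conj_gen (a ++ take i p) (nth x0 p i)) r -> 0 < cnt r a p.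
Proof.
move=> hi h; apply: use_cnt.
exists (take i p), (nth x0 p i), (drop i.+1 p); split => //.
by rewrite -drop_nth // cat_take_drop.
Qed.

Lemma two_pos r a p x0 i j : i < j -> j < size p ->
  W (conj_gen (a ++ take i p) (nth x0 p i)) r ->
  W (conj_gen (a ++ take j p) (nth x0 p j)) r -> 1 < cnt r a p.
Proof.
move=> hij hj h1 h2.
rewrite -(cat_take_drop j p) cnt_cat.
have c1 : 0 < cnt r a (take j p).
  apply: (@pos_use r a (take j p) x0 i).
    by rewrite size_take hj.
  by rewrite take_takel ?(ltnW hij) // nth_take.
have c2 : 0 < cnt r (a ++ take j p) (drop j p).
  apply: (@pos_use r _ (drop j p) x0 0).
    by rewrite size_drop subn_gt0.
  by rewrite take0 cats0 nth_drop addn0.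
by rewrite -(addn1 1) (leq_add c1 c2).
Qed.

Section Reduced.
Variables a b p0 : seq S.
Hypothesis hp0 : W (a ++ p0) b.
Hypothesis hmin : forall q, W (a ++ q) b -> size p0 <= size q.

Definition cand (i : 'I_(size p0)) : seq S :=
  conj_gen (a ++ take i p0) (tnth (in_tuple p0) i).

Lemma cand_nth x0 i : cand i = conj_gen (a ++ take i p0) (nth x0 p0 i).
Proof. by rewrite /cand (tnth_nth x0). Qed.

Lemma cnt_le1 r : cnt r a p0 <= 1.
Proof.
rewrite leqNgt; apply/negP => H.
have /first_use [u [s [p1 [Ep [hu h1]]]]] : 0 < cnt r a p0 by apply: ltnW.
move: H; rewrite Ep cnt_cat hu /=.
have -> : pb (W (conj_gen (a ++ u) s) r) = true by apply/pbP.
rewrite add0n add1n ltnS => H.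
have [m [t [v [Ep1 [hm h2]]]]] := first_use H.
have hd : W (conj_gen (a ++ u) s) (conj_gen ((a ++ u) ++ s :: m) t).
  rewrite h1. symmetry. move: h2. by rewrite -!catA.
have hq : W (a ++ (u ++ m ++ v)) b.
  rewrite -hp0 Ep Ep1. have := del_W v hd. by rewrite -!catA.
have := hmin hq. rewrite Ep Ep1 !size_cat /= !size_cat /=. lia.
Qed.

Lemma cand_pos (i : 'I_(size p0)) : 0 < cnt (cand i) a p0.
Proof.
apply: (@pos_use _ a p0 (tnth (in_tuple p0) i) i) => //.
by rewrite -cand_nth.
Qed.

Lemma cand_wall i : in_walls comm a b (cand i).
Proof.
split.
- by exists (a ++ take i p0), (tnth (in_tuple p0) i).
- move=> q hq.
  have e1 : cnt (cand i) a p0 = 1.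
    by apply/eqP; rewrite eqn_leq cnt_le1 cand_pos.
  have : odd (cnt (cand i) a q).
    rewrite (@path_parity _ a q p0); first by rewrite e1.
    by rewrite hq hp0.
  move=> ho; apply: cnt_use. by case: (cnt _ _ _) ho.
Qed.

Lemma cand_inj (i j : 'I_(size p0)) : W (cand i) (cand j) -> i = j.
Proof.
have gen : forall i j : 'I_(size p0), i < j -> W (cand i) (cand j) -> False.
  move=> i' j' hlt h.
  have := @two_pos (cand j') a p0 (tnth (in_tuple p0) i') i' j' hlt (ltn_ord j').
  rewrite -!cand_nth.
  move=> /(_ h (W_refl _)).
  by rewrite ltnNge cnt_le1.
move=> h. case: (ltngtP i j) => [hl|hl|/val_inj //].
- by case: (gen _ _ hl h).
- by case: (gen _ _ hl (W_sym h)).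
Qed.

Lemma cand_cover r : in_walls comm a b r -> exists i : 'I_(size p0), W r (cand i).
Proof.
move=> [_ hs]. have [u [s [v [Ep hu]]]] := hs p0 hp0.
have hi : size u < size p0 by rewrite Ep size_cat /= addnS ltnS leq_addr.
exists (Ordinal hi). rewrite (cand_nth s) /=.
rewrite Ep take_size_cat // nth_cat ltnn subnn /=. by symmetry.
Qed.


Variable D : nat.
Hypothesis hBPP : bounded_product_projections comm D (winv a ++ b).

Local Notation N := (size p0).

Definition ltb (i j : 'I_N) : bool := pb (wall_lt comm a (cand i) (cand j)).

Lemma ltb_irr i : ~~ ltb i i.
Proof. apply/negP => /pbP; apply: lt_irrefl. exact: (cand_wall i).1. Qed.

Lemma ltb_tr i j k : ltb i j -> ltb j k -> ltb i k.
Proof. move=> /pbP h1 /pbP h2; apply/pbP; exact: lt_trans h1 h2. Qed.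

Lemma ltb_false i j : ~~ ltb i j -> ~ wall_lt comm a (cand i) (cand j).
Proof. move=> /negP H h; apply: H; exact/pbP. Qed.

Definition minimal (i : 'I_N) := [forall j, ~~ ltb j i].

Lemma descent i : exists m, minimal m /\ (m = i \/ ltb m i).
Proof.
have: forall k i, #|[set j | ltb j i]| <= k -> exists m, minimal m /\ (m = i \/ ltb m i).
  elim=> [|k IH] i' hk; case: (boolP (minimal i')) => hm; try by exists i'; split => //; left.
  - move/forallPn: hm => [j]; rewrite negbK => hj.
    have : 0 < #|[set j | ltb j i']| by apply/card_gt0P; exists j; rewrite inE.
    by rewrite ltnNge hk.
  - move/forallPn: hm => [j]; rewrite negbK => hj.
    have hc : #|[set x | ltb x j]| < #|[set x | ltb x i']|.
      apply: proper_card; apply/properP; split.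
      + apply/subsetP => x; rewrite !inE => hx; exact: ltb_tr hx hj.
      + exists j; rewrite !inE //. exact: ltb_irr.
    have hk' : #|[set x | ltb x j]| <= k by rewrite -ltnS (leq_trans hc hk).
    have [m [hm1 hm2]] := IH j hk'.
    exists m; split => //; right. case: hm2 => [->//|h]; exact: ltb_tr h hj.
move=> /(_ _ i (leqnn _)). done.
Qed.

Lemma distinct_cand (s : seq 'I_N) : uniq s -> distinct_walls comm (map cand s).
Proof.
elim: s => //= x s IH /andP [hx hu]; split; last exact: IH.
move=> y /mapP [y' hy' ->] /cand_inj E. by rewrite E hy' in hx.
Qed.

Lemma bpp_idx (s1 s2 : seq 'I_N) : uniq (s1 ++ s2) ->
  (forall x y, x \in s1 -> y \in s2 -> ~~ ltb x y && ~~ ltb y x) ->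
  minn (size s1) (size s2) <= D.
Proof.
rewrite cat_uniq => /and3P [u1 dis u2] inc.
rewrite -(size_map cand s1) -(size_map cand s2).
apply: (BPP_a hBPP).
- exact: distinct_cand.
- exact: distinct_cand.
- move=> x /mapP [x' _ ->]; exact: cand_wall.
- move=> x /mapP [x' _ ->]; exact: cand_wall.
- move=> x y /mapP [x' hx ->] /mapP [y' hy ->] /cand_inj E.
  move/hasPn: dis => /(_ _ hy). by rewrite -E hx.
- move=> x y /mapP [x' hx ->] /mapP [y' hy ->].
  have /andP [h1 h2] := inc _ _ hx hy.
  split; exact: ltb_false.
Qed.

Definition U (i : 'I_N) : {set 'I_N} := [set k | (k == i) || ltb i k].

Lemma inU k i : (k \in U i) = (k == i) || ltb i k.
Proof. by rewrite inE. Qed.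

Definition Mins : {set 'I_N} := [set i | minimal i].

Lemma Mins_card : #|Mins| <= (D + D).+1.
Proof.
rewrite leqNgt; apply/negP => H.
set s := enum Mins.
have hs : size s = #|Mins| by rewrite cardE.
have := @bpp_idx (take D.+1 s) (drop D.+1 s).
rewrite cat_take_drop enum_uniq size_take size_drop hs.
have -> : D.+1 < #|Mins| by move: H; lia.
have H2 : forall x y, x \in take D.+1 s -> y \in drop D.+1 s -> ~~ ltb x y && ~~ ltb y x.
  move=> x y /mem_take hx /mem_drop hy.
  rewrite /s mem_enum !inE in hx; rewrite /s mem_enum !inE in hy.
  by rewrite (forallP hx) (forallP hy).
move=> /(_ (erefl _) H2). lia.
Qed.

Lemma pair_bound m m' : minn #|U m :\: U m'| #|U m' :\: U m| <= D.
Proof.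
rewrite !cardE. apply: bpp_idx.
- rewrite cat_uniq !enum_uniq /= andbT. apply/hasPn => y.
  rewrite !mem_enum !inE => /andP [hy1 hy2]. by rewrite (negbTE hy1) andbF.
- move=> x y; rewrite !mem_enum !inE => /andP [hx1 hx2] /andP [hy1 hy2].
  apply/andP; split; apply/negP => h.
  + move: hy1; case/orP: hx2 => [/eqP Ex|hmx]; first by rewrite -Ex h orbT.
    by rewrite (ltb_tr hmx h) orbT.
  + move: hx1; case/orP: hy2 => [/eqP Ey|hmy]; first by rewrite -Ey h orbT.
    by rewrite (ltb_tr hmy h) orbT.
Qed.

Lemma card_bigcup_le (I T : finType) (P : {set I}) (F : I -> {set T}) :
  #|\bigcup_(i in P) F i| <= \sum_(i in P) #|F i|.
Proof.
elim/big_rec2: _ => [|i X s _ h]; first by rewrite cards0.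
rewrite cardsU. lia.
Qed.

Lemma key : 0 < N -> exists m, minimal m /\ #|~: U m| <= (D + D) * D.
Proof.
move=> hN.
have [i0 [hi0 _]] := descent (Ordinal hN).
have hi0' : i0 \in Mins by rewrite inE.
case: (@arg_maxnP _ i0 (fun i => i \in Mins) (fun i => #|U i|) hi0') => m hm hmax.
exists m; split; first by rewrite inE in hm.
have sub : ~: U m \subset \bigcup_(m' in Mins :\ m) (U m' :\: U m).
  apply/subsetP => k; rewrite inE => hk.
  have [m' [hm' hm'k]] := descent k.
  apply/bigcupP; exists m'.
    rewrite !inE hm' andbT. apply/eqP => E; subst m'.
    by move: hk; rewrite inU; case: hm'k => [->|->]; rewrite ?eqxx ?orbT.
  move: hk; rewrite !inE => -> /=. case: hm'k => [->|->]; by rewrite ?eqxx ?orbT.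
apply: (leq_trans (subset_leq_card sub)).
apply: (leq_trans (card_bigcup_le _ _)).
apply: (@leq_trans (\sum_(m' in Mins :\ m) D)).
  apply: leq_sum => m'; rewrite !inE => /andP [_ hm'].
  have hle : #|U m'| <= #|U m| by apply: hmax; rewrite inE.
  have := pair_bound m m'.
  rewrite !cardsD [U m' :&: U m]setIC. lia.
rewrite sum_nat_const. apply: leq_mul => //.
have e := cardsD1 m Mins; rewrite hm /= in e. have := Mins_card. by rewrite e add1n ltnS.
Qed.

Lemma list_bound (T : {set 'I_N}) (L : seq (seq S)) : distinct_walls comm L ->
  (forall V, V \in L -> exists2 k, k \in T & W V (cand k)) -> size L <= #|T|.
Proof.
elim: L T => //= x l IH T [hx hl] H.
have [k hk ek] := H x (mem_head _ _).
have : size l <= #|T :\ k|.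
  apply: IH => // V hV.
  have hV' : V \in x :: l by rewrite inE hV orbT.
  have [k' hk' ek'] := H V hV'.
  exists k' => //. rewrite !inE hk' andbT. apply/eqP => E; subst k'.
  apply: (hx V hV). apply: W_trans ek _. by symmetry.
by rewrite (cardsD1 k T) hk add1n.
Qed.

End Reduced.
End Toolkit.

Theorem lemma3p6 (S : finType) (comm : rel S)
  (comm_sym : symmetric comm) (comm_irr : irreflexive comm)
  (D : nat) (alpha beta : seq S) :
  0 < D ->
  ~ weq comm (winv alpha ++ beta) [::] ->
  bounded_product_projections comm D (winv alpha ++ beta) ->
  exists W : seq S,
    minimal_wall comm alpha beta W /\
    forall L : seq (seq S),
      distinct_walls comm L ->
      (forall W', W' \in L -> in_walls comm alpha beta W' /\ walls_intersect comm W W') ->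
      size L <= (2 * D + 1) * 4 ^ D.
Proof.
move=> D0 hab hBPP.
have [p0 [hp0 hmin]] := reduced_ex comm alpha beta.
have hN : 0 < size p0.
  case: p0 hp0 hmin => //= hp0 _. exfalso; apply: hab.
  rewrite cats0 in hp0. rewrite /winv -hp0. exact: W_invl.
have [m [hm hcard]] := key comm_sym hp0 hmin hBPP hN.
exists (cand alpha m); split.
- split.
    have := cand_wall comm_sym hp0 hmin m. by [].
  move=> [r' [hr' hlt]].
  have [j ej] := cand_cover hp0 hr'.
  have := forallP hm j. move/negP; apply. apply/pbP.
  exact: lt_weql ej hlt.
- move=> L dL HL.
  apply: (leq_trans (@list_bound S comm alpha p0 (m |: ~: U comm alpha m) L dL _)).
    move=> V hV. have [hVw hint] := HL V hV.
    have [k ek] := cand_cover hp0 hVw.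
    exists k; last exact: ek. rewrite !inE.
    case: hint => [e | [g [s [t [c [h1 h2]]]]]].
      by rewrite (cand_inj hp0 hmin (W_trans e ek)) eqxx.
    case: (eqVneq k m) => //= _.
    apply/negP => /pbP hl. apply: (lt_cross comm_sym c h1 h2).
    apply: lt_weqr hl. by apply: W_sym.
  rewrite cardsU1.
  have hD : D < 4 ^ D by apply: ltn_expl.
  move: hcard hD. case: (_ \notin _) => /=; nia.
Qed.
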